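(* Let $r\ge 3$ be a prime power and let $q=r^2$. If there exist Hermitian self-orthogonal linear codes over $\mathbb{F}_q$ with parameters $[m,k_1,d_1]_q$ and $[m,k_2,d_2]_q$, then there exists a Hermitian self-orthogonal linear code over $\mathbb{F}_q$ with parameters $[2m,k_1+k_2,d]_q$ where $d\ge\min\{2d_1,d_2\}$.
   Context: For $a\in\mathbb{F}_q$, $\overline{a}:=a^r$. The Hermitian inner product on $\mathbb{F}_q^n$ is $\langle u,v\rangle_H=\sum_i u_i\overline{v_i}$; a linear code $C$ is Hermitian self-orthogonal if $C\subseteq C^{\perp_H}$, where $C^{\perp_H}$ is its dual under this inner product. A code with parameters $[n,k,d]_q$ is a linear code of length $n$, dimension $k$ and minimum Hamming weight $d$ over $\mathbb{F}_q$. *)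

(* Defs.v *)
From HB Require Import structures.
From mathcomp Require Import all_boot all_order all_algebra all_field.
Set Implicit Arguments. Unset Strict Implicit. Unset Printing Implicit Defensive.
Import GRing.Theory.
Local Open Scope ring_scope.

(* Linear codes of length n over F are F-subspaces of the row space 'rV[F]_n. *)

Definition hweight (F : fieldType) (n : nat) (c : 'rV[F]_n) : nat :=
  #|[set i : 'I_n | c 0 i != 0]|.

(* Hermitian inner product <u,v>_H = sum_i u_i * (v_i)^r, conjugation a |-> a^r. *)
Definition herm_inner (F : fieldType) (r n : nat) (u v : 'rV[F]_n) : F :=
  \sum_(i < n) u 0 i * (v 0 i) ^+ r.

Definition herm_self_orth (F : fieldType) (r n : nat) (C : {vspace 'rV[F]_n}) : Prop :=
  forall u v, u \in C -> v \in C -> herm_inner r u v = 0.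

Definition code_params (F : fieldType) (n : nat) (C : {vspace 'rV[F]_n}) (k d : nat) : Prop :=
  [/\ \dim C = k,
      exists2 c, (c \in C) && (c != 0) & hweight c = d
    & forall c, c \in C -> c != 0 -> (d <= hweight c)%N].

Definition prime_power (r : nat) : Prop :=
  exists p e, prime p /\ (0 < e)%N /\ r = (p ^ e)%N.

(* Main.v *)
Require Import Defs.
From HB Require Import structures.
From mathcomp Require Import all_boot all_order all_algebra all_field.
From mathcomp Require Import ring zify.
Set Implicit Arguments. Unset Strict Implicit. Unset Printing Implicit Defensive.
Import GRing.Theory.
Local Open Scope ring_scope.

Lemma hweight_sum (F : fieldType) n (c : 'rV[F]_n) :
  hweight c = (\sum_(i < n) nat_of_bool (c 0%R i != 0%R))%N.
Proof.
rewrite /hweight -sum1_card big_mkcond /=; apply: eq_bigr => i _.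
by rewrite inE; case: (_ != _).
Qed.

Lemma hweight_row (F : fieldType) n (x y : 'rV[F]_n) :
  hweight (row_mx x y) = (hweight x + hweight y)%N.
Proof.
by rewrite !hweight_sum big_split_ord /=; congr (_ + _)%N; apply: eq_bigr => i _;
  rewrite ?row_mxEl ?row_mxEr.
Qed.

Lemma hweight_scale (F : fieldType) n (a : F) (x : 'rV[F]_n) : a != 0 ->
  hweight (a *: x) = hweight x.
Proof.
move=> ha; rewrite !hweight_sum; apply: eq_bigr => i _.
by rewrite mxE mulf_eq0 (negbTE ha).
Qed.

Lemma hi_row (F : fieldType) r n (x y x' y' : 'rV[F]_n) :
  herm_inner r (row_mx x y) (row_mx x' y') = herm_inner r x x' + herm_inner r y y'.
Proof.
by rewrite /herm_inner big_split_ord /=; congr (_ + _); apply: eq_bigr => i _;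
  rewrite ?row_mxEl ?row_mxEr.
Qed.

Lemma hiDl (F : fieldType) r n (x y z : 'rV[F]_n) :
  herm_inner r (x + y) z = herm_inner r x z + herm_inner r y z.
Proof. by rewrite /herm_inner -big_split; apply: eq_bigr => i _; rewrite mxE mulrDl. Qed.

Lemma hiZl (F : fieldType) r n c (x z : 'rV[F]_n) :
  herm_inner r (c *: x) z = c * herm_inner r x z.
Proof. by rewrite /herm_inner mulr_sumr; apply: eq_bigr => i _; rewrite mxE mulrA. Qed.

Lemma hiDr (F : fieldType) r n (x y z : 'rV[F]_n) :
  (forall a b : F, (a + b) ^+ r = a ^+ r + b ^+ r) ->
  herm_inner r x (y + z) = herm_inner r x y + herm_inner r x z.
Proof. by move=> fr; rewrite /herm_inner -big_split; apply: eq_bigr => i _; rewrite mxE fr mulrDr. Qed.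

Lemma hiZr (F : fieldType) r n c (x z : 'rV[F]_n) :
  herm_inner r x (c *: z) = c ^+ r * herm_inner r x z.
Proof. by rewrite /herm_inner mulr_sumr; apply: eq_bigr => i _; rewrite mxE exprMn mulrCA. Qed.

Lemma ptw (F : fieldType) (a b x y : F) : a != b ->
  leq (nat_of_bool (y != 0)) (addn (nat_of_bool (x + y != 0)) (nat_of_bool (a * x + b * y != 0))).
Proof.
move=> hab; case: (eqVneq (x + y) 0) => [/eqP|_].
  rewrite addr_eq0 => /eqP ->.
  rewrite mulrN addrC -mulrBl mulf_eq0 subr_eq0 [b == a]eq_sym (negbTE hab) /=.
  by rewrite add0n.
by case: (y != 0); case: (_ != 0).
Qed.

Lemma main_gen (F : finFieldType) r (a b : F) (m k1 d1 k2 d2 : nat)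
    (C1 C2 : {vspace 'rV[F]_m}) :
  (forall x y : F, (x + y) ^+ r = x ^+ r + y ^+ r) ->
  a != b -> a != 0 -> 1 + a * b ^+ r = 0 -> 1 + b * a ^+ r = 0 ->
  herm_self_orth r C1 -> code_params C1 k1 d1 ->
  herm_self_orth r C2 -> code_params C2 k2 d2 ->
  exists (C : {vspace 'rV[F]_(m + m)}) (d : nat),
    [/\ herm_self_orth r C, code_params C (k1 + k2) d
      & (minn (2 * d1) d2 <= d)%N].
Proof.
move=> fr hab ha0 e1 e2 so1 [dim1 [c1 /andP[c1C c1n0] wc1] min1]
  so2 [dim2 _ min2].
pose A1 : 'M[F]_(m, m + m) := row_mx 1%:M a%:M.
pose A2 : 'M[F]_(m, m + m) := row_mx 1%:M b%:M.
pose g1 : 'Hom('rV[F]_m, 'rV[F]_(m + m)) := linfun (mulmxr A1).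
pose g2 : 'Hom('rV[F]_m, 'rV[F]_(m + m)) := linfun (mulmxr A2).
have g1E u : g1 u = row_mx u (a *: u).
  by rewrite lfunE /= mul_mx_row mulmx1 mul_mx_scalar.
have g2E u : g2 u = row_mx u (b *: u).
  by rewrite lfunE /= mul_mx_row mulmx1 mul_mx_scalar.
pose C := (g1 @: C1 + g2 @: C2)%VS.
have memC w : w \in C <-> exists u v, [/\ u \in C1, v \in C2 &
    w = row_mx (u + v) (a *: u + b *: v)].
  split.
    case/memv_addP => w1 /memv_imgP [u uC ->] [w2 /memv_imgP [v vC ->] ->].
    by exists u, v; split => //; rewrite g1E g2E add_row_mx.
  case=> u [v [uC vC ->]]; rewrite -add_row_mx -g1E -g2E.
  by apply: memv_add; apply: memv_img.
have memC' u v : u \in C1 -> v \in C2 -> row_mx (u + v) (a *: u + b *: v) \in C.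
  by move=> uC vC; apply/memC; exists u, v.
have soC : herm_self_orth r C.
  move=> w w' /memC [u [v [uC vC ->]]] /memC [u' [v' [uC' vC' ->]]].
  rewrite hi_row !(hiDl, hiZl, hiDr _ _ _ fr, hiZr).
  rewrite (so1 u u') // (so2 v v') //.
  transitivity ((1 + a * b ^+ r) * herm_inner r u v' + (1 + b * a ^+ r) * herm_inner r v u'); first by ring.
  by rewrite e1 e2 !mul0r addr0.
have wbound c : c \in C -> c != 0 -> (minn (2 * d1) d2 <= hweight c)%N.
  case/memC => u [v [uC vC ->]] cn0.
  have [v0|vn0] := eqVneq v 0.
    move: cn0; rewrite v0 scaler0 !addr0 => cn0.
    have un0 : u != 0 by apply: contraNneq cn0 => ->; rewrite scaler0; apply/eqP; exact: row_mx0.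
    rewrite hweight_row hweight_scale // addnn mul2n.
    by apply: leq_trans (geq_minl _ _) _; rewrite leq_double; apply: min1.
  apply: leq_trans (geq_minr _ _) _; apply: leq_trans (min2 v vC vn0) _.
  rewrite hweight_row !hweight_sum -big_split /=; apply: leq_sum => i _.
  by rewrite !mxE; apply: ptw.
have ex : exists n, [exists c : 'rV[F]_(m + m), [&& c \in C, c != 0 & hweight c == n]].
  exists (hweight (row_mx c1 (a *: c1))); apply/existsP; exists (row_mx c1 (a *: c1)).
  rewrite eqxx andbT; apply/andP; split.
    by have := memC' c1 0 c1C (mem0v _); rewrite scaler0 !addr0.
  by apply: contra c1n0 => /eqP; rewrite -row_mx0 => /eq_row_mx [-> _].
have [d /existsP [c0 /and3P [c0C c0n0 /eqP wc0]] dmin] := ex_minnP ex.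
exists C, d; split => //; last by rewrite -wc0; apply: wbound.
split.
- rewrite dimv_disjoint_sum.
    rewrite !limg_dim_eq ?dim1 ?dim2 //.
      apply/eqP; rewrite -subv0; apply/subvP => w /memv_capP [_].
      by rewrite memv_ker g2E -row_mx0 => /eqP /eq_row_mx [-> _]; rewrite memv0.
    apply/eqP; rewrite -subv0; apply/subvP => w /memv_capP [_].
    by rewrite memv_ker g1E -row_mx0 => /eqP /eq_row_mx [-> _]; rewrite memv0.
  apply/eqP; rewrite -subv0; apply/subvP => w /memv_capP [/memv_imgP [u _ ->]].
  case/memv_imgP => v _; rewrite g1E g2E => /eq_row_mx [euv eab].
  move: eab; rewrite euv => /eqP; rewrite -subr_eq0 -scalerBl scaler_eq0 subr_eq0 (negbTE hab) /=.
  by move/eqP ->; rewrite scaler0 row_mx0 memv0.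
- by exists c0; rewrite ?c0C ?c0n0.
- move=> c cC cn0; apply: dmin; apply/existsP; exists c; by rewrite cC cn0 eqxx.
Qed.

Theorem corollary4p1 (r : nat) (F : finFieldType)
    (hr : prime_power r) (hr3 : (3 <= r)%N) (hF : #|F| = (r ^ 2)%N)
    (m k1 d1 k2 d2 : nat)
    (C1 C2 : {vspace 'rV[F]_m}) :
  herm_self_orth r C1 -> code_params C1 k1 d1 ->
  herm_self_orth r C2 -> code_params C2 k2 d2 ->
  exists (C : {vspace 'rV[F]_(2 * m)}) (d : nat),
    [/\ herm_self_orth r C, code_params C (k1 + k2) d
      & (minn (2 * d1) d2 <= d)%N].
Proof.
case: hr => p [e [pp [e0 rE]]].
have pch : p \in [pchar F].
  by apply: (@card_finPcharP _ p (e * 2)) => //; rewrite hF rE expnM.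
have pn : [pchar F].-nat r by rewrite rE pnatX (pnatE _ pp) pch.
have fr : forall x y : F, (x + y) ^+ r = x ^+ r + y ^+ r.
  by move=> x y; apply: exprDn_pchar.
have eN1 : (-1 : F) ^+ r = -1 by rewrite exprNn_pchar // expr1n.
have frr (x : F) : x ^+ r ^+ r = x by rewrite -exprM mulnn -hF expf_card.
have : [exists b : F, (b != 0) && (b ^+ r.+1 != -1)].
  apply: contraT; rewrite negb_exists => /forallP hall.
  pose P : {poly F} := 'X^(r.+1) + 1%:P.
  have P0 : P != 0 by rewrite -size_poly_eq0 size_XnaddC.
  have hroots : all (root P) (enum (predC1 (0 : F))).
    apply/allP => x; rewrite mem_enum inE => xn0.
    have := hall x; rewrite negb_and xn0 /= negbK => /eqP hx.
    by rewrite /root hornerD hornerXn hornerC hx addNr.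
  have := max_poly_roots P0 hroots (enum_uniq _).
  rewrite size_XnaddC // -cardE cardC1 hF.
  have h1 : (r.+2 <= (r ^ 2).-1)%N by rewrite -mulnn; nia.
  by move=> h2; have := leq_ltn_trans h1 h2; rewrite ltnn.
case/existsP => b /andP [b0 bN].
pose a := - (b ^+ r)^-1.
have br0 : b ^+ r != 0 by rewrite expf_neq0.
have e1 : 1 + a * b ^+ r = 0 by rewrite /a mulNr mulVf // addrN.
have e2 : 1 + b * a ^+ r = 0.
  by rewrite /a -mulN1r exprMn eN1 exprVn frr mulN1r mulrN mulfV // addrN.
have a0 : a != 0 by rewrite /a oppr_eq0 invr_eq0.
have hab : a != b.
  apply: contra bN => /eqP hab; apply/eqP.
  by rewrite exprS -{1}hab; apply/eqP; rewrite -subr_eq0 opprK addrC e1.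
rewrite mul2n -addnn.
exact: main_gen fr hab a0 e1 e2.
Qed.
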